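(* The equation \[ V=1+\frac{y}{x}-\frac{1}{x}V-V_x-\frac{1}{x}V_y+\frac{1}{x}\log V \] has one and only one solution $V$ in the ring $A$ (with $V\in U$, so that $\log V$ is defined).
   Context: Let $A$ be the ring of formal series $a=\sum_{n=0}^\infty \frac{q_n(y)}{x^n}$, where each $q_n$ is a polynomial with complex coefficients of degree at most $n$ (so $q_0$ is a constant), with the obvious addition and multiplication (equivalently $A\cong\mathbb{C}[[X,Y]]$ via $X\mapsto x^{-1}$, $Y\mapsto y x^{-1}$). For nonzero $a$ let $\deg(a)$ be the least $n$ with $q_n\neq0$, $\deg(0)=\infty$, and give $A$ the complete metric induced by $\|a\|=2^{-\deg(a)}$. Formal derivatives: $a_x=-\sum_{n\ge1}\frac{n q_n(y)}{x^{n+1}}$, $a_y=\sum_{n\ge1}\frac{q_n'(y)}{x^n}$. Let $U\subset A$ be the set of elements with $q_0=1$; for $1+u\in U$ define $\log(1+u)=\sum_{k\ge1}(-1)^{k+1}\frac{u^k}{k}$ (convergent in $A$). *)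

(* Defs.v *)
From HB Require Import structures.
From mathcomp Require Import all_boot all_order all_algebra.
From mathcomp Require Import reals.
From mathcomp Require Import complex.
Set Implicit Arguments. Unset Strict Implicit. Unset Printing Implicit Defensive.
Import Order.TTheory GRing.Theory Num.Theory.
Local Open Scope ring_scope.

(* An element  a = \sum_n q_n(y) / x^n  of A is represented by its coefficient
   sequence n |-> q_n, a polynomial in y with complex coefficients. *)
Definition seqA (R : realType) := nat -> {poly R[i]}.

Definition inA (R : realType) (a : seqA R) : Prop :=
  forall n, (size (a n) <= n.+1)%N.

Definition inU (R : realType) (a : seqA R) : Prop := inA a /\ a 0%N = 1.

Section Ops.
Variable R : realType.
Local Notation A := (seqA R).

Definition addA (a b : A) : A := fun n => a n + b n.
Definition oppA (a : A) : A := fun n => - a n.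
Definition subA (a b : A) : A := fun n => a n - b n.
Definition oneA : A := fun n => if n is 0%N then 1 else 0.
Definition y_over_x : A := fun n => if n == 1%N then 'X else 0.
Definition invxA (a : A) : A := fun n => if n is m.+1 then a m else 0.
Definition mulA (a b : A) : A :=
  fun n => \sum_(k < n.+1) a k * b (n - k)%N.
Fixpoint expA (a : A) (k : nat) : A :=
  if k is k'.+1 then mulA a (expA a k') else oneA.
(* formal derivatives:
   a_x = - \sum_{n>=1} n q_n / x^{n+1},  i.e. (a_x)_n = -(n-1) q_{n-1}
   a_y = \sum_n q_n'(y) / x^n *)
Definition dxA (a : A) : A :=
  fun n => if n is m.+1 then - (m%:R *: a m) else 0.
Definition dyA (a : A) : A := fun n => (a n)^`().
(* log(1+u) = \sum_{k>=1} (-1)^(k+1) u^k / k, for 1+u in U.  Since u^k has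
   deg >= k, the coefficient of x^{-n} of the (metrically convergent) series
   is the finite sum over 1 <= k <= n. *)
Definition logA (v : A) : A :=
  let u := subA v oneA in
  fun n => \sum_(1 <= k < n.+1) (((-1) ^+ k.+1) / k%:R) *: expA u k n.

Definition rhs4p1 (V : A) : A :=
  addA (subA (subA (subA (addA oneA y_over_x) (invxA V)) (dxA V))
             (invxA (dyA V)))
       (invxA (logA V)).
End Ops.

(* Main.v *)
Require Import Defs.
From HB Require Import structures.
From mathcomp Require Import all_boot all_order all_algebra.
From mathcomp Require Import reals complex.
Import GRing.Theory Num.Theory.
Local Open Scope ring_scope.

Local Notation subA := Defs.subA.
Local Notation addA := Defs.addA.
Local Notation mulA := Defs.mulA.
Local Notation expA := Defs.expA.
Local Notation logA := Defs.logA.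
Local Notation oneA := Defs.oneA.

Section Aux.
Variable R : realType.
Local Notation A := (seqA R).

Lemma sz_add (p q : {poly R[i]}) N :
  (size p <= N)%N -> (size q <= N)%N -> (size (p + q)%R <= N)%N.
Proof. by move=> hp hq; rewrite (leq_trans (size_polyD _ _)) // geq_max; apply/andP. Qed.

Lemma sz_sub (p q : {poly R[i]}) N :
  (size p <= N)%N -> (size q <= N)%N -> (size (p - q)%R <= N)%N.
Proof. by move=> hp hq; apply: sz_add => //; rewrite size_opp. Qed.

Lemma sz_scale (c : R[i]) (p : {poly R[i]}) N :
  (size p <= N)%N -> (size (c *: p)%R <= N)%N.
Proof. by move=> hp; rewrite (leq_trans (size_scale_leq _ _)). Qed.

Lemma inA_one : inA (oneA R).
Proof. by case=> [|n] /=; rewrite ?size_poly1 ?size_poly0. Qed.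

Lemma inA_sub (a b : A) : inA a -> inA b -> inA (subA a b).
Proof. by move=> ha hb n; apply: sz_sub. Qed.

Lemma inA_mul (a b : A) : inA a -> inA b -> inA (mulA a b).
Proof.
move=> ha hb n; rewrite /mulA.
apply: (big_ind (fun p : {poly R[i]} => (size p <= n.+1)%N)).
- by rewrite size_poly0.
- by move=> p q; apply: sz_add.
move=> [k hk] _ /=.
rewrite (leq_trans (size_mul_leq _ _)) //.
have h1 := ha k; have h2 := hb (n - k)%N.
have : (size (a k) + size (b (n - k)%N) <= k.+1 + (n - k).+1)%N by apply: leq_add.
move=> h3; rewrite -subn1 leq_subLR add1n (leq_trans h3) //.
rewrite ltnS in hk.
by rewrite addSn addnS subnKC.
Qed.

Lemma inA_exp (a : A) k : inA a -> inA (expA a k).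
Proof. by move=> ha; elim: k => [|k IH] /=; [apply: inA_one | apply: inA_mul]. Qed.

Lemma inA_rhs (f : A) : inA f -> inA (rhs4p1 f).
Proof.
move=> hf [|m]; rewrite /rhs4p1 /addA /subA /=.
  by rewrite !addr0 !subr0 size_poly1.
apply: sz_add; last first.
  rewrite /logA.
  apply: (big_ind (fun p : {poly R[i]} => (size p <= m.+2)%N)).
  - by rewrite size_poly0.
  - by move=> p q; apply: sz_add.
  move=> k _; apply: sz_scale.
  by apply: (leq_trans (inA_exp _ k (inA_sub _ _ hf inA_one) m)) (leqnSn _).
have hm := leq_trans (hf m) (leqnSn _).
apply: sz_sub; last first.

  rewrite /Defs.dyA.
  have [->|nz] := eqVneq (f m) 0; first by rewrite deriv0 size_poly0.
  by rewrite (leq_trans (ltnW (lt_size_deriv nz))).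
apply: sz_sub; last by rewrite size_opp; apply: sz_scale.
apply: sz_sub => //; rewrite /y_over_x; apply: sz_add; first by rewrite size_poly0.
by case: ifP => _; rewrite ?size_polyX ?size_poly0.
Qed.

Lemma exp_loc (a b : A) k n :
  (forall j, (j <= n)%N -> a j = b j) -> expA a k n = expA b k n.
Proof.
elim: k n => [|k IH] n h //=.
rewrite /mulA; apply: eq_bigr => [[i hi]] _ /=.
rewrite h //; rewrite IH // => j hj; apply: h.
by rewrite (leq_trans hj) // leq_subr.
Qed.

Lemma rhs_loc (f g : A) n :
  (forall j, (j < n)%N -> f j = g j) -> rhs4p1 f n = rhs4p1 g n.
Proof.
case: n => [|m] h; rewrite /rhs4p1 /addA /subA //=.
rewrite /dyA /logA h // ; congr (_ + _).
apply: eq_bigr => k _; congr (_ *: _); apply: exp_loc => j hj.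
by rewrite /subA h.
Qed.

Fixpoint P (m : nat) : A := if m is m'.+1 then rhs4p1 (P m') else oneA R.

Lemma P_stab m j : (j <= m)%N -> P m.+1 j = P m j.
Proof.
elim: m j => [|m IH] j hj.
  by move: hj; rewrite leqn0 => /eqP ->; rewrite /= /rhs4p1 /addA /subA /= !addr0 !subr0.
by rewrite [P m.+2]/= [P m.+1]/=; apply: rhs_loc => i hi; apply: IH; rewrite -ltnS (leq_trans hi).
Qed.

Lemma P_stab2 m j : (j <= m)%N -> P m j = P j j.
Proof.
move=> /subnK <-; elim: (m - j)%N => [|d IH] //.
by rewrite addSn P_stab // leq_addl.
Qed.

Lemma inA_P m : inA (P m).
Proof. by elim: m => [|m IH] /=; [apply: inA_one | apply: inA_rhs]. Qed.

End Aux.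

Theorem theorem4p1 (R : realType) :
  (exists V : seqA R, inU V /\ (forall n, V n = rhs4p1 V n)) /\
  (forall V W : seqA R,
      inU V -> (forall n, V n = rhs4p1 V n) ->
      inU W -> (forall n, W n = rhs4p1 W n) ->
      forall n, V n = W n).
Proof.
split.
  exists (fun n => P R n n); split; first split.
  - by move=> n; apply: inA_P.
  - by [].
  move=> n.
  transitivity (P R n.+1 n); first by rewrite P_stab.
  rewrite [P R n.+1]/=; apply: rhs_loc => j hj.
  by rewrite P_stab2 // ltnW.
move=> V W _ hV _ hW n.
elim: n {-2}n (leqnn n) => [|n IH] j hj.
  by move: hj; rewrite leqn0 => /eqP ->; rewrite hV hW.
rewrite hV hW; apply: rhs_loc => i hi; apply: IH.
by rewrite -ltnS (leq_trans hi).
Qed.
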